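(* Let $q$ be a prime number, let $l\ge 2$ be an integer and let $N=q^{l}$. Then $$\mathbb{Q}\text{-}\mathcal{KS}(N)=\Bigl(\bigcup_{s\in\mathbb{Z}\setminus\{0\}}\Bigl\{\,q+\frac{d}{s}\;:\; d \text{ a positive integer with } d\mid (q^{l}-q)\Bigr\}\Bigr)\setminus\{0,N\}.$$
   Context: Every nonzero rational $\alpha$ is written $\alpha=\alpha_1/\alpha_2$ with $\alpha_1\in\mathbb{Z}$, $\alpha_2$ a positive integer and $\gcd(\alpha_1,\alpha_2)=1$. For an integer $N\ge 2$ and a nonzero rational $\alpha=\alpha_1/\alpha_2$, $N$ is called an $\alpha$-Korselt number if $N\neq\alpha$ and $\alpha_2p-\alpha_1$ divides $\alpha_2N-\alpha_1$ (in $\mathbb{Z}$) for every prime divisor $p$ of $N$. For a subset $\mathbb{A}\subseteq\mathbb{Q}$, the Korselt set $\mathbb{A}\text{-}\mathcal{KS}(N)$ is the set of all $\beta\in\mathbb{A}\setminus\{0,N\}$ such that $N$ is a $\beta$-Korselt number. Here $a\mid b$ means $b=ac$ for some integer $c$. *)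

(* Defs.v *)
From HB Require Import structures.
From mathcomp Require Import all_boot all_order all_algebra.
Set Implicit Arguments. Unset Strict Implicit. Unset Printing Implicit Defensive.
Import Order.TTheory GRing.Theory Num.Theory.
Local Open Scope ring_scope.

Definition korselt (N : nat) (alpha : rat) : Prop :=
  (2 <= N)%N /\ alpha != N%:R /\
  forall p : nat, prime p -> (p %| N)%N ->
    (denq alpha * p%:Z - numq alpha %| denq alpha * N%:Z - numq alpha)%Z.

Definition QKS (N : nat) (beta : rat) : Prop :=
  beta != 0 /\ beta != N%:R /\ korselt N beta.

(* Main.v *)
Require Import Defs.
From HB Require Import structures.
From mathcomp Require Import all_boot all_order all_algebra.
From mathcomp Require Import ring.
Import Order.TTheory GRing.Theory Num.Theory.
Local Open Scope ring_scope.

Lemma cop_m (b : rat) (q : nat) :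
  coprimez (denq b * q%:Z - numq b) (denq b).
Proof.
rewrite /coprimez gcdzC mulrC -[_ - _]/(q%:Z * denq b + - numq b) gcdzMDl gcdzN gcdzC.
by have := coprime_num_den b; rewrite /coprime.
Qed.

Lemma qlt (q l : nat) : prime q -> (2 <= l)%N -> (q < q ^ l)%N.
Proof.
move=> hq hl; rewrite -{1}(expn1 q) ltn_exp2l //; exact: prime_gt1.
Qed.

Lemma aux1 (a b q : rat) : b != 0 -> a / b = q + - (b * q - a) / b.
Proof. by move=> h; field. Qed.
Lemma aux2 (a b q : rat) : b != 0 -> a / b = q + (b * q - a) / - b.
Proof. by move=> h; field. Qed.

Lemma aux3 (a2 s q d : rat) : s != 0 -> (a2 * q - (q + d / s) * a2) * s = - (a2 * d).
Proof. by move=> h; field. Qed.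

Theorem theorem3p1 (q l : nat) (hq : prime q) (hl : (2 <= l)%N) (beta : rat) :
  QKS (q ^ l) beta <->
  ((exists s : int, s != 0 /\
      exists d : nat, (0 < d)%N /\ (d %| q ^ l - q)%N /\
        beta = q%:R + d%:R / s%:~R)
   /\ beta != 0 /\ beta != (q ^ l)%:R).
Proof.
have hql := @qlt q l hq hl.
have q1 := prime_gt1 hq.
have hcop := cop_m beta q.
set a1 := numq beta in hcop *; set a2 := denq beta in hcop *.
have a2pos : 0 < a2 by exact: denq_gt0.
have a2nz : (a2%:~R : rat) != 0 by rewrite intr_eq0 gt_eqF.
have hb : beta = a1%:~R / a2%:~R by rewrite divq_num_den.
have e1 : (a1%:~R : rat) = beta * a2%:~R by rewrite numqE.
set m := a2 * q%:Z - a1 in hcop *.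
set X := (q ^ l - q)%N.
have Xpos : (0 < X)%N by rewrite subn_gt0.
have key : a2 * (q ^ l)%:Z - a1 = m + a2 * X%:Z.
  by rewrite /m /X -(subzn (ltnW hql)); ring.
have mR : (m%:~R : rat) = a2%:~R * q%:R - a1%:~R.
  by rewrite /m rmorphB rmorphM /=.
have Ea1 : numq beta = a1 by [].
have Ea2 : denq beta = a2 by [].
have Em : a2 * q%:Z - a1 = m by [].
clearbody m a1 a2.
split.
- move=> [bn0 [bnN [_ [_ Hk]]]].
  have := Hk q hq (dvdn_exp (ltnW hl) (dvdnn q)).
  rewrite Ea1 Ea2 Em key rpredDl ?dvdzz // Gauss_dvdzr //.
  move=> hmX0; have hmX : (`|m| %| X)%N := hmX0.
  have mnz : m != 0.
    apply/eqP => m0; move: hmX; rewrite m0 /= dvd0n; move/eqP => X0.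
    by move: Xpos; rewrite X0.
  split=> //.
  have [mneg|mpos|m0] := ltrgtP m 0; last by rewrite m0 in mnz.
  + exists a2; split; first by rewrite gt_eqF.
    exists `|m|%N; split; first by rewrite absz_gt0.
    split=> //.
    rewrite natr_absz intr_norm ltr0_norm ?ltrz0 // ?rmorphN /= mR. rewrite {1}hb. exact: aux1.
  + exists (- a2); split; first by rewrite oppr_eq0 gt_eqF.
    exists `|m|%N; split; first by rewrite absz_gt0.
    split=> //.
    rewrite natr_absz intr_norm gtr0_norm ?ltr0z // ?rmorphN /= mR; rewrite {1}hb; exact: aux2.
- move=> [[s [snz [d [dpos [ddvd hbeta]]]]] [bn0 bnN]].
  split=> //; split=> //; split.
    exact: leq_trans q1 (ltnW hql).
  split=> // p pp pdvd.
  have pq : p = q.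
    by apply/eqP; rewrite -dvdn_prime2 //; move: pdvd; rewrite Euclid_dvdX // => /andP[].
  rewrite pq Ea1 Ea2 Em key rpredDl ?dvdzz //.
  have snzR : (s%:~R : rat) != 0 by rewrite intr_eq0.
  have ms : m * s = - (a2 * d%:Z).
    apply: (@intr_inj rat); rewrite rmorphM rmorphN rmorphM /= mR.
    rewrite e1 hbeta; exact: aux3.
  case/dvdnP: ddvd => k hk.
  have -> : a2 * X%:Z = m * (- (s * k%:Z)).
    rewrite -/X in hk; rewrite hk PoszM.
    have -> : m * - (s * k%:Z) = - (m * s) * k%:Z by ring.
    rewrite ms; ring.
  by apply: dvdz_mulr; exact: dvdzz.
Qed.
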